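(* Let $f:D\subset\mathbb{R}\times\mathbb{R}^3\to\mathbb{R}^3$ be a $C^3$ velocity field with $\operatorname{tr}\nabla f(t,x)\equiv 0$ (incompressible), let $t_0\in\mathbb{R}$, $T>0$, and let $x\in X(t_0)$ be a point whose solution exists on $[t_0,t_0+T]$. Let $N=\nabla\tilde f_T(x)$ be the mesochronic Jacobian, with characteristic polynomial $\lambda^3-t_{\tilde f}\lambda^2+m_{\tilde f}\lambda-d_{\tilde f}$, i.e. $t_{\tilde f}=\operatorname{tr}N$, $m_{\tilde f}=\operatorname{tr}\operatorname{cof}N$ (sum of the three principal $2\times2$ minors), $d_{\tilde f}=\det N$. Define $$\Sigma=\frac{d_{\tilde f}T^3}{8-2m_{\tilde f}T^2-3d_{\tilde f}T^3},$$ $$\Delta=-4d_{\tilde f}^4T^{12}-12d_{\tilde f}^3m_{\tilde f}T^{11}-13d_{\tilde f}^2m_{\tilde f}^2T^{10}-6d_{\tilde f}m_{\tilde f}^3T^9+(18d_{\tilde f}^2m_{\tilde f}-m_{\tilde f}^4)T^8+18d_{\tilde f}m_{\tilde f}^2T^7+(27d_{\tilde f}^2+4m_{\tilde f}^3)T^6.$$ Let $\mu_1,\mu_2,\mu_3$ be the eigenvalues (with multiplicity) of $\nabla\psi_T(x)$. Then: (i) If $8-2m_{\tilde f}T^2-3d_{\tilde f}T^3=0$, then $-1$ is an eigenvalue of $\nabla\psi_T(x)$, all three eigenvalues are real, and $x$ is non-mesohyperbolic. (ii) If $8-2m_{\tilde f}T^2-3d_{\tilde f}T^3\neq0$ (so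 $\Sigma$ is finite): if $\Sigma>0$, exactly two eigenvalues (counted with multiplicity) lie strictly inside the unit circle and one strictly outside; if $\Sigma<0$, exactly one lies strictly inside and two strictly outside; if $\Sigma=0$, then $1$ is an eigenvalue. (iii) If $\Delta<0$ the eigenvalues are real and distinct; if $\Delta>0$ there is one real eigenvalue and a pair of non-real complex-conjugate eigenvalues; if $\Delta=0$ all eigenvalues are real and (at least) two coincide. (iv) $x$ is mesohyperbolic on $[t_0,t_0+T]$ if and only if $d_{\tilde f}\neq0$ and $8-2m_{\tilde f}T^2-3d_{\tilde f}T^3\neq0$.
   Context: $\phi(t,t_0,x_0)$ denotes the solution of $\dot x=f(t,x)$ with $x(t_0)=x_0$. $X(t_0)\subset\mathbb{R}^3$ is an open set of initial values whose solutions exist on $[t_0,t_0+T]$. The time-$T$ map is $\psi_T(x)=\phi(t_0+T,t_0,x)$; by incompressibility $\det\nabla\psi_T\equiv1$. The mesochronic velocity is $\tilde f_T(x)=\frac1T\int_{t_0}^{t_0+T}f(\tau,\phi(\tau,t_0,x))\,d\tau$, so that $\psi_T(x)=x+T\tilde f_T(x)$ and $\nabla\psi_T(x)=\mathrm{Id}+T\nabla\tilde f_T(x)$; its Jacobian $\nabla\tilde f_T$ is the mesochronic Jacobian. A point $x$ is mesohyperbolic on $[t_0,t_0+T]$ if no eigenvalue of $\nabla\psi_T(x)$ has modulus $1$; otherwise it is non-mesohyperbolic. *)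

(* Defs.v *)
From HB Require Import structures.
From mathcomp Require Import all_boot all_order all_algebra.
Set Implicit Arguments. Unset Strict Implicit. Unset Printing Implicit Defensive.
Import Order.TTheory GRing.Theory Num.Theory.
Local Open Scope ring_scope.

Section Meso.
Variable C : numClosedFieldType.
Implicit Types (N M : 'M[C]_3) (T : C).

(* grad psi_T(x) = Id + T * grad f~_T(x), with N = grad f~_T(x) the mesochronic Jacobian *)
Definition gradPsi T N : 'M[C]_3 := 1%:M + T *: N.

Definition tr_f N : C := \tr N.
Definition m_f N : C := \tr (\adj N).   (* tr cof N = sum of principal 2x2 minors *)
Definition d_f N : C := \det N.

Definition denS T N : C := 8 - 2 * m_f N * T ^+ 2 - 3 * d_f N * T ^+ 3.
Definition Sigma T N : C := d_f N * T ^+ 3 / denS T N.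
Definition Delta T N : C :=
  let d := d_f N in let m := m_f N in
  - 4 * d ^+ 4 * T ^+ 12 - 12 * d ^+ 3 * m * T ^+ 11 - 13 * d ^+ 2 * m ^+ 2 * T ^+ 10
  - 6 * d * m ^+ 3 * T ^+ 9 + (18 * d ^+ 2 * m - m ^+ 4) * T ^+ 8
  + 18 * d * m ^+ 2 * T ^+ 7 + (27 * d ^+ 2 + 4 * m ^+ 3) * T ^+ 6.

Definition mesohyperbolic M : Prop := forall mu : C, eigenvalue M mu -> `|mu| != 1.
End Meso.

(* Main.v *)
Require Import Defs.
From HB Require Import structures.
From mathcomp Require Import all_boot all_order all_algebra.
Import Order.TTheory GRing.Theory Num.Theory.
Local Open Scope ring_scope.
From mathcomp Require Import ring.
Import Num.Def.

Module Helpers.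
Set Implicit Arguments. Unset Strict Implicit.

Lemma det3 (R : comNzRingType) (A : 'M[R]_3) :
  \det A = A 0 0 * A 1 1 * A 2 2 - A 0 0 * A 1 2 * A 2 1
         - A 0 1 * A 1 0 * A 2 2 + A 0 1 * A 1 2 * A 2 0
         + A 0 2 * A 1 0 * A 2 1 - A 0 2 * A 1 1 * A 2 0.
Proof.
rewrite (expand_det_row _ 0) !big_ord_recl big_ord0 /cofactor.
rewrite !(expand_det_row _ 0) !big_ord_recl !big_ord0 /cofactor.
rewrite !det_mx11 !mxE.
pose f (i j : nat) := A (inord i) (inord j).
have E : forall x y : 'I_3, A x y = f x y by move=> x y; rewrite /f !inord_val.
clearbody f. rewrite !E /=. ring.
Qed.

Lemma tradj3 (R : comNzRingType) (A : 'M[R]_3) :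
  \tr (\adj A) = A 1 1 * A 2 2 - A 1 2 * A 2 1 + A 0 0 * A 2 2 - A 0 2 * A 2 0
     + A 0 0 * A 1 1 - A 0 1 * A 1 0.
Proof.
rewrite /mxtrace !big_ord_recl big_ord0 !mxE /cofactor.
rewrite !(expand_det_row _ 0) !big_ord_recl !big_ord0 /cofactor.
rewrite !det_mx11 !mxE.
pose f (i j : nat) := A (inord i) (inord j).
have E : forall x y : 'I_3, A x y = f x y by move=> x y; rewrite /f !inord_val.
clearbody f. rewrite !E /=. ring.
Qed.

Lemma detaIbN (R : comNzRingType) (A : 'M[R]_3) (a b : R) :
  \det (a%:M + b *: A) = a ^+ 3 + a ^+ 2 * b * \tr A + a * b ^+ 2 * \tr (\adj A)
    + b ^+ 3 * \det A.
Proof.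
rewrite tradj3 !det3 /mxtrace !big_ord_recl big_ord0 !mxE /=.
pose f (i j : nat) := A (inord i) (inord j).
have E : forall x y : 'I_3, A x y = f x y by move=> x y; rewrite /f !inord_val.
clearbody f. rewrite !E /=.
have h1 : (1 %% 3 = 1)%N by []. have h2 : ((1 %% 3 + 1 %% 3) %% 3 = 2)%N by [].
have b1 : bump 0 0 = 1%N by []. have b2 : bump 0 1 = 2%N by [].
rewrite ?h2 ?h1 ?b1 ?b2 ?mulr1n ?mulr0n. ring.
Qed.

Lemma ord3P (i : 'I_3) : [\/ i = 0, i = 1 | i = 2].
Proof.
case: i => [[|[|[|n]]] Hi].
- by constructor 1; apply: val_inj.
- by constructor 2; apply: val_inj.
- by constructor 3; apply: val_inj.
- by [].
Qed.

Lemma card3 (P : pred 'I_3) : #|[set i | P i]| = (P 0%R + P 1%R + P 2%R)%N.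
Proof.
rewrite -sum1_card big_mkcond /= !big_ord_recl big_ord0 !inE addn0 addnA.
have e1 : lift ord0 ord0 = 1 :> 'I_3 by apply: val_inj.
have e2 : lift ord0 (lift ord0 ord0) = 2 :> 'I_3 by apply: val_inj.
by rewrite e1 e2 /=; case: (P 0); case: (P 1); case: (P 2).
Qed.

Lemma prod3 (R : comNzRingType) (F : 'I_3 -> R) : \prod_(i < 3) F i = F 0 * F 1 * F 2.
Proof.
rewrite !big_ord_recl big_ord0 mulr1 mulrA.
have e1 : lift ord0 ord0 = 1 :> 'I_3 by apply: val_inj.
have e2 : lift ord0 (lift ord0 ord0) = 2 :> 'I_3 by apply: val_inj.
by rewrite e1 e2.
Qed.

Lemma tr3 (R : comNzRingType) (A : 'M[R]_3) : \tr A = A 0 0 + A 1 1 + A 2 2.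
Proof.
rewrite /mxtrace !big_ord_recl big_ord0 addr0 addrA.
have e1 : lift ord0 ord0 = 1 :> 'I_3 by apply: val_inj.
have e2 : lift ord0 (lift ord0 ord0) = 2 :> 'I_3 by apply: val_inj.
by rewrite e1 e2.
Qed.

Lemma char_horner (F : fieldType) n (A : 'M[F]_n) x :
  (char_poly A).[x] = \det (x%:M - A).
Proof.
rewrite horner_sum; apply: eq_bigr => s _.
rewrite hornerM horner_exp !hornerE; congr (_ * _).
rewrite (big_morph _ (fun p q => hornerM p q x) (hornerC 1 x)).
by apply: eq_bigr => i _; rewrite !mxE !(hornerE, hornerMn).
Qed.

Ltac sg := first [ rewrite subr_gt0; assumption | rewrite subr_lt0; assumption
  | apply: mulr_gt0; sg | rewrite nmulr_rgt0; [sg|sg]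
  | rewrite pmulr_rlt0; [sg|sg] | rewrite nmulr_rlt0; [sg|sg] ].

Section Core.
Variable C : numClosedFieldType.
Implicit Types (a b c u v w x y z s q : C).

Lemma one_neq_m1 : (1 : C) != -1.
Proof.
apply/eqP => h. have : (2%:R : C) == 0 by rewrite mulr2n {1}h addNr.
by rewrite pnatr_eq0.
Qed.

Lemma tri1 x : 0 <= x -> [\/ x < 1, x = 1 | 1 < x].
Proof.
move=> hx; case: (real_ltgtP (ger0_real hx) (@real1 _)) => h.
- by constructor 1. - by constructor 3. - by constructor 2.
Qed.

Lemma countsL u v w : 0 <= u -> 0 <= v -> 0 <= w -> u * v * w = 1 ->
  ((1 - u) * (1 - v) * (1 - w) < 0 ->
     ((u < 1)%R + (v < 1)%R + (w < 1)%R = 2 /\ (1 < u)%R + (1 < v)%R + (1 < w)%R = 1)%N) /\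
  (0 < (1 - u) * (1 - v) * (1 - w) ->
     ((u < 1)%R + (v < 1)%R + (w < 1)%R = 1 /\ (1 < u)%R + (1 < v)%R + (1 < w)%R = 2)%N).
Proof.
move=> hu0 hv0 hw0 huvw.
have sp x : x < 1 -> sgr (1 - x) = 1 by move=> h; apply: gtr0_sg; rewrite subr_gt0.
have sn x : 1 < x -> sgr (1 - x) = -1 by move=> h; apply: ltr0_sg; rewrite subr_lt0.
have m1 := one_neq_m1.
have m2 : (-1 : C) != 1 by rewrite eq_sym.
case: (tri1 hu0) => hu; try (by rewrite hu subrr !(mul0r, mulr0) ltxx; split);
case: (tri1 hv0) => hv; try (by rewrite hv subrr !(mul0r, mulr0) ltxx; split);
case: (tri1 hw0) => hw; try (by rewrite hw subrr !(mul0r, mulr0) ltxx; split).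
all: try (have : u * v * w < 1 by
  apply: mulr_ilt1 => //; [exact: mulr_ge0 | exact: mulr_ilt1]);
  try (by rewrite huvw ltxx).
all: try (have : 1 < u * v * w by apply: mulr_egt1 => //; exact: mulr_egt1);
  try (by rewrite huvw ltxx).
all: rewrite ?hu ?hv ?hw ?(lt_gtF hu) ?(lt_gtF hv) ?(lt_gtF hw).
all: split => // HR; exfalso.
all: first [ have h : 0 < (1 - u) * (1 - v) * (1 - w) by sg
           | have h : (1 - u) * (1 - v) * (1 - w) < 0 by sg ].
all: first [ by move: (lt_trans HR h); rewrite ltxx | by move: (lt_trans h HR); rewrite ltxx ].
Qed.

Lemma conj_root s q z : s \is Num.real -> q \is Num.real ->
  z ^+ 3 - s * z ^+ 2 + q * z - 1 = 0 ->
  z^* ^+ 3 - s * z^* ^+ 2 + q * z^* - 1 = 0.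
Proof.
move=> Hs Hq /(congr1 (fun x => x^* )).
by rewrite !(rmorphB, rmorphD, rmorphM, rmorphXn, rmorph1, rmorph0) /=
  (conj_Creal Hs) (conj_Creal Hq).
Qed.

Lemma addconj_real z : z + z^* \is Num.real.
Proof. by rewrite CrealE rmorphD /= conjCK addrC. Qed.

Lemma structure a b c : a + b + c \is Num.real -> a * b + b * c + c * a \is Num.real ->
  a * b * c = 1 ->
  [\/ [/\ a \is Num.real, b \is Num.real & c \is Num.real],
      [/\ a \isn't Num.real, b = a^* & c \is Num.real],
      [/\ a \isn't Num.real, c = a^* & b \is Num.real] |
      [/\ b \isn't Num.real, c = b^* & a \is Num.real]].
Proof.
move=> Hs Hq He.
have Hp z : (z - a) * (z - b) * (z - c) =
   z ^+ 3 - (a + b + c) * z ^+ 2 + (a * b + b * c + c * a) * z - 1.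
  by rewrite -He; ring.
have Hc z : (z - a) * (z - b) * (z - c) = 0 -> [\/ z^* = a, z^* = b | z^* = c].
  rewrite Hp => /(conj_root Hs Hq); rewrite -Hp => /eqP.
  rewrite !mulf_eq0 !subr_eq0 => /orP[/orP[]|] /eqP h.
  - by constructor 1. - by constructor 2. - by constructor 3.
have Ec : c = (a + b + c) - a - b by ring.
have Eb : b = (a + b + c) - (a + c) by ring.
case: (boolP (a \is Num.real)) => Ra.
  case: (boolP (b \is Num.real)) => Rb.
    constructor 1; split => //; rewrite Ec; do 2 apply: rpredB => //.
  have := Hc b; rewrite subrr mulr0 mul0r => /(_ erefl) [] h.
  - by move: Rb; rewrite -(conjCK b) h conj_Creal // Ra.
  - by move: Rb; rewrite CrealE h eqxx.
  - by constructor 4; split.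
have := Hc a; rewrite subrr !mul0r => /(_ erefl) [] h.
- by move: Ra; rewrite CrealE h eqxx.
- constructor 2; split => //.
  have Ec2 : c = (a + b + c) - (a + b) by ring.
  by rewrite Ec2; apply: rpredB => //; rewrite -h; exact: addconj_real.
- constructor 3; split => //.
  by rewrite Eb; apply: rpredB => //; rewrite -h; exact: addconj_real.
Qed.

Lemma sqr_pos x : x \is Num.real -> x != 0 -> 0 < x * x.
Proof. by move=> Rx nx; rewrite -expr2 -real_normK // exprn_gt0 // normr_gt0. Qed.

Lemma conj_pos x : x != 0 -> 0 < x * x^*.
Proof. by move=> nx; rewrite mul_conjC_gt0. Qed.

Definition cnt_in a b c := ((`|a| < 1)%R + (`|b| < 1)%R + (`|c| < 1)%R)%N.
Definition cnt_out a b c := ((1 < `|a|)%R + (1 < `|b|)%R + (1 < `|c|)%R)%N.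
Definition Rq a b c := (1 - a ^+ 2) * (1 - b ^+ 2) * (1 - c ^+ 2).
Definition Dq a b c := ((a - b) * (b - c) * (c - a)) ^+ 2.
Definition PMq a b c := (1 + a) * (1 + b) * (1 + c).

Lemma cnt_sq a b c : cnt_in a b c =
  ((`|a| ^+ 2 < 1)%R + (`|b| ^+ 2 < 1)%R + (`|c| ^+ 2 < 1)%R)%N /\ cnt_out a b c = ((1 < `|a| ^+ 2)%R + (1 < `|b| ^+ 2)%R + (1 < `|c| ^+ 2)%R)%N.
Proof. by rewrite /cnt_in /cnt_out !expr_lt1 ?expr_gt1. Qed.

Lemma RL a b c : a \is Num.real -> b \is Num.real -> c \is Num.real -> a * b * c = 1 ->
  [/\ 0 <= Dq a b c,
      Rq a b c < 0 -> cnt_in a b c = 2%N /\ cnt_out a b c = 1%N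
    & 0 < Rq a b c -> cnt_in a b c = 1%N /\ cnt_out a b c = 2%N].
Proof.
move=> Ra Rb Rc He.
have [ci co] := cnt_sq a b c.
have H := @countsL (`|a| ^+ 2) (`|b| ^+ 2) (`|c| ^+ 2)
   (exprn_ge0 _ (normr_ge0 _)) (exprn_ge0 _ (normr_ge0 _)) (exprn_ge0 _ (normr_ge0 _)).
rewrite -!exprMn -!normrM He normr1 expr1n in H.
have {H}[H1 H2] := H erefl.
rewrite !real_normK // in H1 H2.
split.
- by rewrite /Dq real_exprn_even_ge0 // !(rpredM, rpredB).
- by move=> h; rewrite ci co !real_normK //; apply: H1.
- by move=> h; rewrite ci co !real_normK //; apply: H2.
Qed.

Lemma NR a c : a \isn't Num.real -> c \is Num.real -> a * a^* * c = 1 ->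
  [/\ 0 < PMq a a^* c, Dq a a^* c < 0,
      Rq a a^* c < 0 -> cnt_in a a^* c = 2%N /\ cnt_out a a^* c = 1%N
    & 0 < Rq a a^* c -> cnt_in a a^* c = 1%N /\ cnt_out a a^* c = 2%N].
Proof.
move=> Na Rc He.
have real_ne x y : x \is Num.real -> y \isn't Num.real -> x != y.
  by move=> Rx Ny; apply: contraNneq Ny => <-.
have a0 : a != 0 by rewrite eq_sym real_ne.
have ua : 0 < a * a^* by apply: conj_pos.
have hc : c = (a * a^*)^-1 by rewrite -[c](mulKf (lt0r_neq0 ua)) He mulr1.
have c0 : 0 < c by rewrite hc invr_gt0.
have [ci co] := cnt_sq a a^* c.
rewrite norm_conjC in ci co.
set u := `|a| ^+ 2 in ci co. set w := `|c| ^+ 2 in ci co.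
have u0 : 0 <= u by apply: exprn_ge0.
have w0 : 0 <= w by apply: exprn_ge0.
have uuw : u * u * w = 1.
  by rewrite /u /w -{2}(norm_conjC a) -!exprMn -!normrM He normr1 expr1n.
have [L1 L2] := countsL u0 u0 w0 uuw.
have a2 : 1 - a ^+ 2 != 0.
  apply/eqP => h; move: Na; have : (1 - a) * (1 + a) = 0 by rewrite -h; ring.
  move/eqP; rewrite mulf_eq0 => /orP[] /eqP h2.
  - move=> /negP []; have -> : a = 1 - (1 - a) by ring.
    by rewrite h2 subr0 real1.
  - move=> /negP []; have -> : a = (1 + a) - 1 by ring.
    by rewrite h2 sub0r rpredN real1.
have kpos := conj_pos a2.
have ERq : Rq a a^* c = (1 - a ^+ 2) * (1 - a ^+ 2)^* * (1 - w).
  by rewrite /Rq /w real_normK // rmorphB rmorph1 rmorphXn.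
have Ru : 1 - u \is Num.real by rewrite rpredB ?real1 ?ger0_real.
have un1 : 1 - w != 0 -> 1 - u != 0.
  apply: contra => /eqP h; have hu : u = 1 by rewrite -[u]add0r -h; ring.
  by move: uuw; rewrite hu !mul1r => ->; rewrite subrr.
split.
- rewrite /PMq; apply: mulr_gt0; last by apply: addr_gt0.
  have -> : 1 + a^* = (1 + a)^* by rewrite rmorphD rmorph1.
  by apply: conj_pos; rewrite addrC -[1]opprK subr_eq0 eq_sym real_ne // rpredN real1.
- have z0 : a - a^* != 0 by rewrite subr_eq0; apply: contraNneq Na => h; rewrite CrealE -h.
  have wa0 : c - a != 0 by rewrite subr_eq0 real_ne.
  have h1 := conj_pos z0. have h2 := conj_pos wa0.
  rewrite rmorphB /= conjCK in h1. rewrite rmorphB /= (conj_Creal Rc) in h2.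
  have -> : Dq a a^* c = - ((a - a^*) * (a^* - a)) * ((c - a) * (c - a^*)) ^+ 2.
    by rewrite /Dq; ring.
  by rewrite mulNr oppr_lt0; apply: mulr_gt0 => //; apply: exprn_gt0.
- move=> h; rewrite ERq pmulr_rlt0 // in h.
  have hR : (1 - u) * (1 - u) * (1 - w) < 0.
    by rewrite pmulr_rlt0 // sqr_pos // un1 // ltr0_neq0.
  by rewrite ci co; apply: L1.
- move=> h; rewrite ERq pmulr_rgt0 // in h.
  have hR : 0 < (1 - u) * (1 - u) * (1 - w).
    by rewrite pmulr_rgt0 // sqr_pos // un1 // lt0r_neq0.
  by rewrite ci co; apply: L2.
Qed.
End Core.

End Helpers.
Import Helpers.

Section Perm.
Variable C : numClosedFieldType.
Implicit Types (a b c : C).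
Lemma perm132 a b c : [/\ cnt_in a c b = cnt_in a b c, cnt_out a c b = cnt_out a b c,
  Rq a c b = Rq a b c, Dq a c b = Dq a b c & PMq a c b = PMq a b c].
Proof.
split; first by rewrite /cnt_in addnAC. by rewrite /cnt_out addnAC.
all: rewrite /Rq /Dq /PMq; ring.
Qed.
Lemma perm231 a b c : [/\ cnt_in b c a = cnt_in a b c, cnt_out b c a = cnt_out a b c,
  Rq b c a = Rq a b c, Dq b c a = Dq a b c & PMq b c a = PMq a b c].
Proof.
split; first by rewrite /cnt_in addnC addnA. by rewrite /cnt_out addnC addnA.
all: rewrite /Rq /Dq /PMq; ring.
Qed.
End Perm.

Theorem mainTheorem1 (C : numClosedFieldType) (N : 'M[C]_3) (T : C) (mu : 'I_3 -> C)
  (HNreal : N \is a mxOver Num.real)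
  (HT : 0 < T)
  (Hincomp : \det (gradPsi T N) = 1)
  (Hmu : char_poly (gradPsi T N) = \prod_(i < 3) ('X - (mu i)%:P)) :
  [/\
   (* (i) *)
   denS T N = 0 ->
     [/\ eigenvalue (gradPsi T N) (-1), (forall i, mu i \is Num.real)
       & ~ mesohyperbolic (gradPsi T N)],
   (* (ii) *)
   denS T N != 0 ->
     [/\ 0 < Sigma T N ->
           #|[set i | `|mu i| < 1]| = 2%N /\ #|[set i | 1 < `|mu i|]| = 1%N,
         Sigma T N < 0 ->
           #|[set i | `|mu i| < 1]| = 1%N /\ #|[set i | 1 < `|mu i|]| = 2%N
       & Sigma T N = 0 -> eigenvalue (gradPsi T N) 1],
   (* (iii) *)
   [/\ Delta T N < 0 ->
         (forall i, mu i \is Num.real) /\ (forall i j, i != j -> mu i != mu j),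
       0 < Delta T N ->
         exists i j k : 'I_3, [/\ uniq [:: i; j; k], mu i \is Num.real,
                                  mu j \isn't Num.real & mu k = (mu j)^*]
     & Delta T N = 0 ->
         (forall i, mu i \is Num.real) /\ (exists i j : 'I_3, i != j /\ mu i = mu j)]
   (* (iv) *)
   & mesohyperbolic (gradPsi T N) <-> (d_f N != 0 /\ denS T N != 0)].
Proof.
have HNr : forall i j, N i j \is Num.real by apply/mxOverP.
have Rt : \tr N \is Num.real.
  by rewrite tr3; repeat first [apply: HNr | apply: rpredB | apply: rpredD | apply: rpredM | apply: rpredN].
have Rm : m_f N \is Num.real.
  by rewrite /m_f tradj3; repeat first [apply: HNr | apply: rpredB | apply: rpredD | apply: rpredM | apply: rpredN].
have Rd : d_f N \is Num.real.
  by rewrite /d_f det3; repeat first [apply: HNr | apply: rpredB | apply: rpredD | apply: rpredM | apply: rpredN].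
have RT : T \is Num.real := gtr0_real HT.
have T0 : T != 0 := lt0r_neq0 HT.
have EP : forall x, (x - mu 0) * (x - mu 1) * (x - mu 2) =
   (x - 1) ^+ 3 + (x - 1) ^+ 2 * (- T) * \tr N + (x - 1) * (- T) ^+ 2 * m_f N
   + (- T) ^+ 3 * d_f N.
  move=> x; rewrite -detaIbN.
  have -> : (x - 1)%:M + (- T) *: N = x%:M - gradPsi T N.
    by rewrite /gradPsi scaleNr opprD addrA -(raddfB (@scalar_mx C 3)).
  by rewrite -char_horner Hmu prod3 !hornerM !hornerXsubC.
have Eig : forall x, eigenvalue (gradPsi T N) x <->
    (x - mu 0) * (x - mu 1) * (x - mu 2) = 0.
  move=> x; rewrite eigenvalue_root_char rootE Hmu prod3 !hornerM !hornerXsubC.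
  by split => /eqP.
rewrite /gradPsi detaIbN -/(m_f N) -/(d_f N) in Hincomp.
have Cin : #|[set i | `|mu i| < 1]| = cnt_in (mu 0) (mu 1) (mu 2).
  by rewrite (card3 (fun i => `|mu i| < 1)).
have Cout : #|[set i | 1 < `|mu i|]| = cnt_out (mu 0) (mu 1) (mu 2).
  by rewrite (card3 (fun i => 1 < `|mu i|)).
rewrite /Sigma /Delta /denS /mesohyperbolic /=.
set t := \tr N in Rt EP Hincomp; set m := m_f N in Rm EP Hincomp *.
set d := d_f N in Rd EP Hincomp *.
rewrite Cin Cout.
have Hinc' : T * t = - (T ^+ 2 * m) - T ^+ 3 * d.
  transitivity ((1 ^+ 3 + 1 ^+ 2 * T * t + 1 * T ^+ 2 * m + T ^+ 3 * d) - 1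
     - T ^+ 2 * m - T ^+ 3 * d); first by ring.
  by rewrite Hincomp; ring.
have He : mu 0 * mu 1 * mu 2 = 1.
  transitivity (- ((0 - mu 0) * (0 - mu 1) * (0 - mu 2))); first by ring.
  rewrite EP. transitivity (1 + T * t + T ^+ 2 * m + T ^+ 3 * d); first by ring.
  by rewrite Hinc'; ring.
have E1 : (1 - mu 0) * (1 - mu 1) * (1 - mu 2) = - (T ^+ 3 * d) by rewrite EP; ring.
set DS := 8 - 2 * m * T ^+ 2 - 3 * d * T ^+ 3.
have EPM : PMq (mu 0) (mu 1) (mu 2) = DS.
  transitivity (- ((-1 - mu 0) * (-1 - mu 1) * (-1 - mu 2))); first by rewrite /PMq; ring.
  rewrite EP. transitivity (8 + 4 * (T * t) + 2 * (T ^+ 2 * m) + T ^+ 3 * d); first by ring.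
  by rewrite Hinc' /DS; ring.
have two : (2 : C) != 0 by rewrite pnatr_eq0.
have Hs : mu 0 + mu 1 + mu 2 = 3 - m * T ^+ 2 - d * T ^+ 3.
  apply: (mulfI two).
  transitivity (PMq (mu 0) (mu 1) (mu 2) - (1 - mu 0) * (1 - mu 1) * (1 - mu 2)
     - 2 * (mu 0 * mu 1 * mu 2)); first by rewrite /PMq; ring.
  by rewrite EPM E1 He /DS; ring.
have Hq : mu 0 * mu 1 + mu 1 * mu 2 + mu 2 * mu 0 = 3 - m * T ^+ 2 - 2 * d * T ^+ 3.
  apply: (mulfI two).
  transitivity (PMq (mu 0) (mu 1) (mu 2) + (1 - mu 0) * (1 - mu 1) * (1 - mu 2) - 2);
    first by rewrite /PMq; ring.
  by rewrite EPM E1 /DS; ring.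
have Rs : mu 0 + mu 1 + mu 2 \is Num.real.
  by rewrite Hs; repeat first [assumption | apply: realn | apply: rpredB | apply: rpredD
     | apply: rpredM | apply: rpredN | apply: rpredX].
have Rq' : mu 0 * mu 1 + mu 1 * mu 2 + mu 2 * mu 0 \is Num.real.
  by rewrite Hq; repeat first [assumption | apply: realn | apply: rpredB | apply: rpredD
     | apply: rpredM | apply: rpredN | apply: rpredX].
have RDS : DS \is Num.real.
  by rewrite /DS; repeat first [assumption | apply: realn | apply: rpredB | apply: rpredD
     | apply: rpredM | apply: rpredN | apply: rpredX].
have HD : Dq (mu 0) (mu 1) (mu 2) =
   - (- 4 * d ^+ 4 * T ^+ 12 - 12 * d ^+ 3 * m * T ^+ 11 - 13 * d ^+ 2 * m ^+ 2 * T ^+ 10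
  - 6 * d * m ^+ 3 * T ^+ 9 + (18 * d ^+ 2 * m - m ^+ 4) * T ^+ 8
  + 18 * d * m ^+ 2 * T ^+ 7 + (27 * d ^+ 2 + 4 * m ^+ 3) * T ^+ 6).
  transitivity ((mu 0 + mu 1 + mu 2) ^+ 2 * (mu 0 * mu 1 + mu 1 * mu 2 + mu 2 * mu 0) ^+ 2
    - 4 * (mu 0 * mu 1 + mu 1 * mu 2 + mu 2 * mu 0) ^+ 3
    - 4 * (mu 0 + mu 1 + mu 2) ^+ 3 * (mu 0 * mu 1 * mu 2)
    + 18 * (mu 0 + mu 1 + mu 2) * (mu 0 * mu 1 + mu 1 * mu 2 + mu 2 * mu 0) * (mu 0 * mu 1 * mu 2)
    - 27 * (mu 0 * mu 1 * mu 2) ^+ 2); first by rewrite /Dq; ring.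
  by rewrite Hs Hq He; ring.
move/(congr1 (fun x => - x)): HD; rewrite opprK => HD.
rewrite -HD.
have ST := structure Rs Rq' He.
have Summ : [/\ mu 0 \is Num.real, mu 1 \is Num.real & mu 2 \is Num.real] \/
   [/\ 0 < PMq (mu 0) (mu 1) (mu 2), Dq (mu 0) (mu 1) (mu 2) < 0,
       Rq (mu 0) (mu 1) (mu 2) < 0 ->
         cnt_in (mu 0) (mu 1) (mu 2) = 2%N /\ cnt_out (mu 0) (mu 1) (mu 2) = 1%N
     & 0 < Rq (mu 0) (mu 1) (mu 2) ->
         cnt_in (mu 0) (mu 1) (mu 2) = 1%N /\ cnt_out (mu 0) (mu 1) (mu 2) = 2%N].
  case: ST => [H|[Na Eb Rc]|[Na Ec Rb]|[Nb Ec Ra]]; first by left.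
  - have [h1 h2 h3 h4] := NR Na Rc ltac:(by rewrite -Eb).
    by rewrite -Eb in h1 h2 h3 h4; right.
  - have [h1 h2 h3 h4] := NR Na Rb ltac:(by rewrite -Ec mulrAC).
    rewrite -Ec in h1 h2 h3 h4.
    have [p1 p2 p3 p4 p5] := @perm132 C (mu 0) (mu 1) (mu 2).
    by rewrite p1 p2 p3 p4 p5 in h1 h2 h3 h4; right.
  - have [h1 h2 h3 h4] := NR Nb Ra ltac:(by rewrite -Ec -He; ring).
    rewrite -Ec in h1 h2 h3 h4.
    have [p1 p2 p3 p4 p5] := @perm231 C (mu 0) (mu 1) (mu 2).
    by rewrite p1 p2 p3 p4 p5 in h1 h2 h3 h4; right.
have allR : [/\ mu 0 \is Num.real, mu 1 \is Num.real & mu 2 \is Num.real] ->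
    forall i, mu i \is Num.real.
  by move=> [R0 R1 R2] i; case: (ord3P i) => ->.
have Eigm1 : DS = 0 -> eigenvalue (gradPsi T N) (-1).
  move=> h; apply/Eig.
  transitivity (- PMq (mu 0) (mu 1) (mu 2)); first by rewrite /PMq; ring.
  by rewrite EPM h oppr0.
have Eig1 : d = 0 -> eigenvalue (gradPsi T N) 1.
  by move=> h; apply/Eig; rewrite E1 h mulr0 oppr0.
split.
- move=> hD; split; first exact: Eigm1.
  + case: Summ => [H|[h _ _ _]]; first exact: allR.
    by move: h; rewrite EPM hD ltxx.
  + by move=> Hm; move: (Hm _ (Eigm1 hD)); rewrite normrN normr1 eqxx.
- move=> hD.
  have ER : Rq (mu 0) (mu 1) (mu 2) = - (d * T ^+ 3 / DS * (DS * DS)).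
    transitivity ((1 - mu 0) * (1 - mu 1) * (1 - mu 2) * PMq (mu 0) (mu 1) (mu 2));
      first by rewrite /Rq /PMq; ring.
    rewrite E1 EPM. field. exact: hD.
  have sq : 0 < DS * DS by apply: sqr_pos.
  split.
  + move=> hS; have hR : Rq (mu 0) (mu 1) (mu 2) < 0.
      by rewrite ER oppr_lt0 mulr_gt0.
    case: Summ => [[R0 R1 R2]|[_ _ h3 _]]; last exact: h3.
    by have [_ H _] := RL R0 R1 R2 He; apply: H.
  + move=> hS; have hR : 0 < Rq (mu 0) (mu 1) (mu 2).
      by rewrite ER oppr_gt0 pmulr_llt0.
    case: Summ => [[R0 R1 R2]|[_ _ _ h4]]; last exact: h4.
    by have [_ _ H] := RL R0 R1 R2 He; apply: H.
  + move=> /eqP; rewrite mulf_eq0 invr_eq0 (negbTE hD) orbF mulf_eq0 expf_eq0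
      (negbTE T0) andbF orbF => /eqP h.
    exact: Eig1.
- split.
  + rewrite oppr_lt0 => hpos.
    case: Summ => [H|[_ h _ _]]; last by move: (lt_trans h hpos); rewrite ltxx.
    split; first exact: allR.
    have : (mu 0 - mu 1) * (mu 1 - mu 2) * (mu 2 - mu 0) != 0.
      by apply: contraTneq hpos => h; rewrite /Dq h expr0n ltxx.
    rewrite !mulf_eq0 !subr_eq0 !negb_or => /andP[/andP[h01 h12] h20].
    move=> i j; case: (ord3P i) => ->; case: (ord3P j) => ->;
      rewrite ?eqxx //= => _; by rewrite ?h01 ?h12 ?h20 // eq_sym ?h01 ?h12 ?h20.
  + rewrite oppr_gt0 => hneg.
    case: ST => [[R0 R1 R2]|[Na Eb Rc]|[Na Ec Rb]|[Nb Ec Ra]].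
    * have [H _ _] := RL R0 R1 R2 He.
      by move: (le_lt_trans H hneg); rewrite ltxx.
    * by exists 2, 0, 1.
    * by exists 1, 0, 2.
    * by exists 0, 1, 2.
  + move/eqP; rewrite oppr_eq0 => /eqP h0.
    case: Summ => [H|[_ h _ _]]; last by move: h; rewrite h0 ltxx.
    split; first exact: allR.
    move: h0; rewrite /Dq => /eqP; rewrite expf_eq0 /= !mulf_eq0 !subr_eq0.
    case/orP => [/orP[]|] /eqP h.
    * by exists 0, 1.
    * by exists 1, 2.
    * by exists 2, 0.
- split.
  + move=> Hm; split.
    * apply/eqP => h; move: (Hm _ (Eig1 h)); by rewrite normr1 eqxx.
    * apply/eqP => h; move: (Hm _ (Eigm1 h)); by rewrite normrN normr1 eqxx.
  + case=> dn0 Dn0 x /Eig hx; apply/negP => /eqP nx1.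
    have hxx : x * x^* = 1 by rewrite -normCK nx1 expr1n.
    have Hp z : (z - mu 0) * (z - mu 1) * (z - mu 2) =
        z ^+ 3 - (mu 0 + mu 1 + mu 2) * z ^+ 2
        + (mu 0 * mu 1 + mu 1 * mu 2 + mu 2 * mu 0) * z - 1.
      by rewrite -He; ring.
    have Px := hx; rewrite Hp in Px.
    have Pxc := conj_root Rs Rq' Px.
    have key : ((mu 0 * mu 1 + mu 1 * mu 2 + mu 2 * mu 0) - (mu 0 + mu 1 + mu 2))
        * x * (x + 1) = 0.
      transitivity ((x ^+ 3 - (mu 0 + mu 1 + mu 2) * x ^+ 2
        + (mu 0 * mu 1 + mu 1 * mu 2 + mu 2 * mu 0) * x - 1)
        + ((x * x^*) ^+ 3 - (mu 0 + mu 1 + mu 2) * x * (x * x^*) ^+ 2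
        + (mu 0 * mu 1 + mu 1 * mu 2 + mu 2 * mu 0) * x ^+ 2 * (x * x^*) - x ^+ 3)).
        by rewrite hxx; ring.
      transitivity ((x ^+ 3 - (mu 0 + mu 1 + mu 2) * x ^+ 2
        + (mu 0 * mu 1 + mu 1 * mu 2 + mu 2 * mu 0) * x - 1)
        + x ^+ 3 * (x^* ^+ 3 - (mu 0 + mu 1 + mu 2) * x^* ^+ 2
        + (mu 0 * mu 1 + mu 1 * mu 2 + mu 2 * mu 0) * x^* - 1)); first by ring.
      by rewrite Px Pxc mulr0 addr0.
    have hQS : (mu 0 * mu 1 + mu 1 * mu 2 + mu 2 * mu 0) - (mu 0 + mu 1 + mu 2) =
       (1 - mu 0) * (1 - mu 1) * (1 - mu 2) + (mu 0 * mu 1 * mu 2 - 1) by ring.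
    rewrite hQS He subrr addr0 E1 in key.
    move/eqP: key; rewrite !mulf_eq0 oppr_eq0 mulf_eq0 expf_eq0 (negbTE T0) andbF /=.
    rewrite (negbTE dn0) /=.
    case/orP => /eqP h.
    * by move: nx1; rewrite h normr0 => /eqP; rewrite eq_sym oner_eq0.
    * have xm1 : x = -1 by apply/eqP; rewrite -subr_eq0 opprK h.
      move: hx; rewrite xm1 => hx.
      move/eqP: Dn0; apply; rewrite -EPM.
      transitivity (- ((-1 - mu 0) * (-1 - mu 1) * (-1 - mu 2))); first by rewrite /PMq; ring.
      by rewrite hx oppr0.
Qed.
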